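(* Let $\{\eta_n\}_{n\ge1}$ be nonzero complex numbers with $|\eta_n|$ nondecreasing, such that there exist $N,C>0$ with $|\eta_n|\ge Cn^2$ for $n\ge N$. Let $D_n$, $n=0,1,2,\dots$, be open discs of radius $R>0$ centred at $c_n$, with $c_0=0$ and $|\eta_n-c_n|\le R/2$ for $n\ge1$, and assume there is $\tilde N$ such that the closed discs $\overline D_n$ are pairwise disjoint for $n>\tilde N$. For an integer $m\ge0$ let $P(\lambda)=\lambda^m\prod_{n=1}^\infty(1-\lambda/\eta_n)$. Then $1/P\in\mathcal A_1\big(\mathbb{C}\setminus\bigcup_{n=0}^\infty\overline D_n\big)$.
   Context: For an open set $\Omega'\subset\mathbb{C}$ and $p>0$, $\mathcal A_p(\Omega')$ is the set of holomorphic $f$ on $\Omega'$ for which there exist $c,M>0$ with $|f(\lambda)|\le Me^{c|\lambda|^p}$ for all $\lambda\in\Omega'$. Here $1/P$ denotes the multiplicative inverse of $P$. *)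

(* Defs.v *)
From Stdlib Require Export Reals.
From Coquelicot Require Export Coquelicot.

Open Scope C_scope.

Definition holomorphic_on (Om : C -> Prop) (f : C -> C) : Prop :=
  forall z : C, Om z -> @ex_derive C_AbsRing C_NormedModule f z.

(* |z|^p for real p > 0 (with 0^p = 0). *)
Definition cpow_abs (z : C) (p : R) : R :=
  if Req_EM_T (Cmod z) 0 then 0%R else Rpower (Cmod z) p.

Definition A_ (p : R) (Om : C -> Prop) (f : C -> C) : Prop :=
  holomorphic_on Om f /\
  exists c M : R, (0 < c)%R /\ (0 < M)%R /\
    forall l : C, Om l -> (Cmod (f l) <= M * exp (c * cpow_abs l p))%R.

Fixpoint partial_prod (eta : nat -> C) (N : nat) (l : C) : C :=
  match N with
  | O => 1
  | S k => partial_prod eta k l * (1 - l / eta (S k))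
  end.

(* Main.v *)
Require Import Defs.
From Stdlib Require Import Lra Lia Psatz Compare_dec.

Section Part_A.


Lemma Cmod_rev (a b : C) : (Cmod a - Cmod b <= Cmod (a - b))%R.
Proof.
  assert (H := Cmod_triangle (a - b) b).
  replace (a - b + b) with a in H by ring. lra.
Qed.

Lemma QE (f : C -> C) (z0 D : C) (B d : R) :
  (0 < d)%R ->
  (forall h : C, (Cmod h <= d)%R -> (Cmod ((f (z0 + h) - f z0 - h * D)%C) <= B * Cmod h ^ 2)%R) ->
  @is_derive C_AbsRing C_NormedModule f z0 D.
Proof.
  intros Hd HB. split.
  - apply is_linear_scal_l.
  - intros x Hx. assert (Hx2 : z0 = x) by exact (@is_filter_lim_locally_unique C_AbsRing (AbsRing_NormedModule C_AbsRing) z0 x Hx). subst x.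
    intros eps. apply (@locally_le_locally_norm C_AbsRing (AbsRing_NormedModule C_AbsRing)).
    assert (HB0 : (0 <= B)%R).
    { specialize (HB (RtoC d)). rewrite Cmod_R, Rabs_pos_eq in HB by lra.
      assert (0 <= B * d^2)%R. { eapply Rle_trans. apply Cmod_ge_0. apply HB. lra. }
      apply Rmult_le_reg_r with (d^2)%R. nra. lra. }
    assert (Hp : (0 < Rmin d (eps / (B + 1)))%R).
    { apply Rmin_pos. lra. apply Rdiv_lt_0_compat. apply cond_pos. lra. }
    exists (mkposreal _ Hp). intros y Hy. unfold ball_norm in Hy. simpl in Hy.
    change (norm (minus y z0)) with (Cmod (y - z0)) in *.
    change (norm (minus (minus (f y) (f z0)) (scal (minus y z0) D))) with
      (Cmod (f y - f z0 - (y - z0) * D)).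
    set (h := y - z0) in *.
    replace y with (z0 + h) by (unfold h; ring).
    assert (H1 : (Cmod h <= d)%R). { apply Rlt_le. eapply Rlt_le_trans. apply Hy. apply Rmin_l. }
    assert (H2 : (Cmod h <= eps / (B+1))%R). { apply Rlt_le. eapply Rlt_le_trans. apply Hy. apply Rmin_r. }
    eapply Rle_trans. apply HB. exact H1.
    assert (Hh := Cmod_ge_0 h).
    assert (B * Cmod h <= eps)%R.
    { apply Rle_trans with ((B+1) * (eps / (B+1)))%R.
      assert (0 < eps)%R by apply cond_pos. nra.
      field_simplify; lra. }
    simpl. nra.
Qed.

Lemma QE2 (f : C -> C) (z0 D : C) (B d : R) :
  (0 < d)%R ->
  (forall h : C, (Cmod h <= d)%R -> (Cmod ((f (z0 + h) - f z0 - h * D)%C) <= B * Cmod h ^ 2)%R) ->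
  @is_derive C_AbsRing (AbsRing_NormedModule C_AbsRing) f z0 D.
Proof.
  intros Hd HB. split.
  - apply is_linear_scal_l.
  - intros x Hx. assert (Hx2 : z0 = x) by exact (@is_filter_lim_locally_unique C_AbsRing (AbsRing_NormedModule C_AbsRing) z0 x Hx). subst x.
    intros eps. apply (@locally_le_locally_norm C_AbsRing (AbsRing_NormedModule C_AbsRing)).
    assert (HB0 : (0 <= B)%R).
    { specialize (HB (RtoC d)). rewrite Cmod_R, Rabs_pos_eq in HB by lra.
      assert (0 <= B * d^2)%R. { eapply Rle_trans. apply Cmod_ge_0. apply HB. lra. }
      apply Rmult_le_reg_r with (d^2)%R. nra. lra. }
    assert (Hp : (0 < Rmin d (eps / (B + 1)))%R).
    { apply Rmin_pos. lra. apply Rdiv_lt_0_compat. apply cond_pos. lra. }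
    exists (mkposreal _ Hp). intros y Hy. unfold ball_norm in Hy. simpl in Hy.
    change (norm (minus y z0)) with (Cmod (y - z0)) in *.
    change (norm (minus (minus (f y) (f z0)) (scal (minus y z0) D))) with
      (Cmod (f y - f z0 - (y - z0) * D)).
    set (h := y - z0) in *.
    replace y with (z0 + h) by (unfold h; ring).
    assert (H1 : (Cmod h <= d)%R). { apply Rlt_le. eapply Rlt_le_trans. apply Hy. apply Rmin_l. }
    assert (H2 : (Cmod h <= eps / (B+1))%R). { apply Rlt_le. eapply Rlt_le_trans. apply Hy. apply Rmin_r. }
    eapply Rle_trans. apply HB. exact H1.
    assert (Hh := Cmod_ge_0 h).
    assert (B * Cmod h <= eps)%R.
    { apply Rle_trans with ((B+1) * (eps / (B+1)))%R.
      assert (0 < eps)%R by apply cond_pos. nra.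
      field_simplify; lra. }
    simpl. nra.
Qed.

End Part_A.

Section Part_B.


Lemma Cinv_QE (w0 h : C) : w0 <> 0 -> (Cmod h <= Cmod w0 / 2)%R ->
  (Cmod ((/ (w0 + h) - / w0 - h * (- / (w0 * w0)))%C) <= (2 / (Cmod w0 ^ 3)) * Cmod h ^ 2)%R.
Proof.
  intros Hw Hh.
  assert (Hw0 : (0 < Cmod w0)%R) by (apply Cmod_gt_0; auto).
  assert (Hwh : (Cmod w0 / 2 <= Cmod (w0 + h))%R).
  { assert (H := Cmod_rev w0 (-h)). rewrite Cmod_opp in H.
    replace (w0 - - h) with (w0 + h) in H by ring. lra. }
  assert (Hwh0 : w0 + h <> 0). { intro E. rewrite E, Cmod_0 in Hwh. lra. }
  replace ((/ (w0 + h) - / w0 - h * (- / (w0 * w0)))%C) with (h * h / (w0 * w0 * (w0 + h)))%C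
    by (field; split; auto).
  rewrite Cmod_div. 2:{ apply Cmult_neq_0; auto. apply Cmult_neq_0; auto. }
  rewrite !Cmod_mult.
  assert (Hh0 := Cmod_ge_0 h).
  apply Rle_trans with (Cmod h * Cmod h / (Cmod w0 * Cmod w0 * (Cmod w0 / 2)))%R.
  - unfold Rdiv. apply Rmult_le_compat_l. nra.
    apply Rinv_le_contravar.
    + apply Rmult_lt_0_compat. apply Rmult_lt_0_compat; lra. lra.
    + apply Rmult_le_compat_l. apply Rmult_le_pos; lra. lra.
  - right. field. lra.
Qed.

Lemma Cinv_deriv (w0 : C) : w0 <> 0 ->
  @is_derive C_AbsRing C_NormedModule Cinv w0 (- / (w0 * w0))%C.
Proof.
  intros Hw. assert (Hw0 : (0 < Cmod w0)%R) by (apply Cmod_gt_0; auto).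
  apply QE with (B := (2 / Cmod w0 ^ 3)%R) (d := (Cmod w0 / 2)%R). lra.
  intros h Hh. apply Cinv_QE; auto.
Qed.

Definition Good (h a b d : C) (Y W : R) : Prop :=
  (Cmod a <= W)%R /\ (Cmod (a - b) <= Cmod h * Y * W)%R /\
  (Cmod (a - b - h * d) <= Cmod h ^ 2 * Y ^ 2 * W)%R.

Lemma Good_step (h a b d x y : C) (Y W Wf : R) :
  (0 <= Y)%R -> (Cmod h <= 1)%R -> (1 <= Wf)%R -> (Cmod x + Cmod y <= Wf)%R ->
  Good h a b d Y W ->
  Good h (a * (x + y * h)) (b * x) (d * x + b * y) (Y + Cmod y) (W * Wf).
Proof.
  intros HY Hh HWf Hxy [G1 [G2 G3]].
  assert (Ha := Cmod_ge_0 a). assert (Hx := Cmod_ge_0 x). assert (Hy := Cmod_ge_0 y).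
  assert (Hh0 := Cmod_ge_0 h). assert (Hab := Cmod_ge_0 (a - b)).
  assert (Hr := Cmod_ge_0 (a - b - h * d)).
  assert (HW : (0 <= W)%R) by lra.
  split; [|split].
  - rewrite Cmod_mult. eapply Rle_trans. apply Rmult_le_compat_l. lra. apply Cmod_triangle.
    rewrite Cmod_mult.
    apply Rmult_le_compat; try lra. apply Rplus_le_le_0_compat. lra. apply Rmult_le_pos; lra.
    nra.
  - replace (a * (x + y * h) - b * x) with (x * (a - b) + h * (y * a)) by ring.
    eapply Rle_trans. apply Cmod_triangle. rewrite !Cmod_mult.
    assert (Cmod x * (Cmod (a - b)) <= Wf * (Cmod h * Y * W))%R by (apply Rmult_le_compat; lra).
    assert (Cmod y * Cmod a <= Cmod y * W)%R by nra.
    assert (Cmod y * W <= Cmod y * W * Wf)%R.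
    { assert (0 <= Cmod y * W)%R by (apply Rmult_le_pos; lra). nra. }
    assert (Cmod h * (Cmod y * Cmod a) <= Cmod h * (Cmod y * W * Wf))%R by nra.
    nra.
  - replace (a * (x + y * h) - b * x - h * (d * x + b * y)) with
      (x * (a - b - h * d) + h * (y * (a - b))) by ring.
    eapply Rle_trans. apply Cmod_triangle. rewrite !Cmod_mult.
    assert (Cmod x * Cmod (a - b - h * d) <= Wf * (Cmod h ^ 2 * Y ^ 2 * W))%R
      by (apply Rmult_le_compat; lra).
    assert (Cmod y * Cmod (a - b) <= Cmod y * (Cmod h * Y * W))%R by nra.
    assert (Cmod y * (Cmod h * Y * W) <= Cmod y * (Cmod h * Y * W) * Wf)%R.
    { assert (0 <= Cmod y * (Cmod h * Y * W))%R by (repeat apply Rmult_le_pos; lra). nra. }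
    assert (Cmod h * (Cmod y * Cmod (a - b)) <= Cmod h * (Cmod y * (Cmod h * Y * W) * Wf))%R by nra.
    assert (0 <= Cmod h ^ 2 * W * Wf)%R by (repeat apply Rmult_le_pos; nra).
    assert (Cmod h ^ 2 * (Y + Cmod y) ^ 2 * (W * Wf) =
            Cmod h ^ 2 * Y ^ 2 * W * Wf + Cmod h * (Cmod y * (Cmod h * Y * W) * Wf) +
            Cmod h ^ 2 * W * Wf * (Cmod y * Y + Cmod y ^ 2))%R by ring.
    assert (0 <= Cmod h ^ 2 * W * Wf * (Cmod y * Y + Cmod y ^ 2))%R.
    { apply Rmult_le_pos. lra. nra. }
    nra.
Qed.

Lemma Good_weaken h a b d Y W Y' W' : (0 <= Y <= Y')%R -> (W <= W')%R ->
  Good h a b d Y W -> Good h a b d Y' W'.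
Proof.
  intros HY HW [G1 [G2 G3]].
  assert (0 <= W)%R by (eapply Rle_trans; [apply Cmod_ge_0|exact G1]).
  assert (Hh := Cmod_ge_0 h).
  split; [lra|split].
  - eapply Rle_trans. apply G2. apply Rmult_le_compat; try lra.
    apply Rmult_le_pos; lra. apply Rmult_le_compat_l; lra.
  - eapply Rle_trans. apply G3. apply Rmult_le_compat; try lra.
    apply Rmult_le_pos; nra. apply Rmult_le_compat_l. nra. nra.
Qed.

End Part_B.

Section Part_Cc.
Local Open Scope C_scope.


Fixpoint ssum (eta : nat -> C) (K : nat) : R :=
  match K with O => 0%R | S k => (ssum eta k + / Cmod (eta (S k)))%R end.

Fixpoint wprod (eta : nat -> C) (a : R) (K : nat) : R :=
  match K with O => 1%R | S k => (wprod eta a k * (1 + a / Cmod (eta (S k))))%R end.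

Fixpoint Dpp (eta : nat -> C) (z0 : C) (K : nat) : C :=
  match K with O => 0 | S k => Dpp eta z0 k * (1 - z0 / eta (S k)) + partial_prod eta k z0 * (- / eta (S k)) end.

Fixpoint Dm (eta : nat -> C) (z0 : C) (K : nat) (j : nat) : C :=
  match j with O => Dpp eta z0 K | S i => Dm eta z0 K i * z0 + z0 ^ i * partial_prod eta K z0 end.

Lemma ssum_nonneg (eta : nat -> C) K : (forall n, (1 <= n)%nat -> eta n <> 0) -> (0 <= ssum eta K)%R.
Proof.
  intros Hne. induction K; simpl. lra.
  assert (0 < Cmod (eta (S K)))%R by (apply Cmod_gt_0; apply Hne; lia).
  assert (0 < / Cmod (eta (S K)))%R by (apply Rinv_0_lt_compat; auto). lra.
Qed.

Lemma pp_good (eta : nat -> C) (z0 h : C) : (forall n, (1 <= n)%nat -> eta n <> 0) -> (Cmod h <= 1)%R ->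
  forall K, Good h (partial_prod eta K (z0 + h)) (partial_prod eta K z0) (Dpp eta z0 K)
    (ssum eta K) (wprod eta (Cmod z0 + 1) K).
Proof.
  intros Hne Hh K. induction K.
  - simpl. unfold Good. rewrite Cmod_1.
    replace (1 - 1 - h * 0) with (RtoC 0) by ring. replace (1 - 1) with (RtoC 0) by ring.
    rewrite Cmod_0. repeat split; ring_simplify; lra.
  - simpl.
    assert (He : eta (S K) <> 0) by (apply Hne; lia).
    assert (He0 : (0 < Cmod (eta (S K)))%R) by (apply Cmod_gt_0; auto).
    replace (1 - (z0 + h) / eta (S K)) with ((1 - z0 / eta (S K)) + (- / eta (S K)) * h)
      by (field; auto).
    replace (/ Cmod (eta (S K)))%R with (Cmod (- / eta (S K))).
    2:{ rewrite Cmod_opp, Cmod_inv; auto. }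
    apply Good_step; auto.
    + apply ssum_nonneg; auto.
    + assert (0 <= (Cmod z0 + 1) / Cmod (eta (S K)))%R.
      { assert (H := Cmod_ge_0 z0). unfold Rdiv. apply Rmult_le_pos. lra. left. apply Rinv_0_lt_compat; auto. }
      lra.
    + rewrite Cmod_opp, Cmod_inv; auto.
      assert (H1 := Cmod_triangle 1 (- (z0 / eta (S K)))).
      replace (1 + - (z0 / eta (S K))) with (1 - z0 / eta (S K)) in H1 by ring.
      rewrite Cmod_opp, Cmod_div, Cmod_1 in H1; auto.
      unfold Rdiv in *. rewrite Rmult_plus_distr_r. lra.
Qed.

Lemma Q_good (eta : nat -> C) (z0 h : C) K : (forall n, (1 <= n)%nat -> eta n <> 0) -> (Cmod h <= 1)%R ->
  forall j, Good h ((z0 + h) ^ j * partial_prod eta K (z0 + h)) (z0 ^ j * partial_prod eta K z0)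
    (Dm eta z0 K j) (ssum eta K + INR j) (wprod eta (Cmod z0 + 1) K * (Cmod z0 + 1) ^ j).
Proof.
  intros Hne Hh j. induction j.
  - simpl. rewrite Rplus_0_r, Rmult_1_r.
    replace (1 * partial_prod eta K (z0 + h)) with (partial_prod eta K (z0 + h)) by ring.
    replace (1 * partial_prod eta K z0) with (partial_prod eta K z0) by ring.
    apply pp_good; auto.
  - rewrite S_INR. simpl Dm.
    replace ((z0 + h) ^ S j * partial_prod eta K (z0 + h)) with
      (((z0 + h) ^ j * partial_prod eta K (z0 + h)) * (z0 + 1 * h)) by (rewrite Cpow_S; ring).
    replace (z0 ^ S j * partial_prod eta K z0) with ((z0 ^ j * partial_prod eta K z0) * z0)
      by (rewrite Cpow_S; ring).
    replace (Dm eta z0 K j * z0 + z0 ^ j * partial_prod eta K z0) with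
      (Dm eta z0 K j * z0 + (z0 ^ j * partial_prod eta K z0) * 1) by ring.
    replace (ssum eta K + (INR j + 1))%R with (ssum eta K + INR j + Cmod 1)%R by (rewrite Cmod_1; ring).
    replace (wprod eta (Cmod z0 + 1) K * (Cmod z0 + 1) ^ S j)%R with
      (wprod eta (Cmod z0 + 1) K * (Cmod z0 + 1) ^ j * (Cmod z0 + 1))%R by (simpl; ring).
    apply Good_step; auto.
    + assert (H := ssum_nonneg eta K Hne). assert (H2 := pos_INR j). lra.
    + assert (H := Cmod_ge_0 z0). lra.
    + rewrite Cmod_1. lra.
Qed.

End Part_Cc.

Section Part_D.
Local Open Scope C_scope.


Lemma lim_norm (u : nat -> C) (y : C) : filterlim u eventually (locally y) ->
  forall e, (0 < e)%R -> exists N, forall n, (N <= n)%nat -> (Cmod (u n - y) < e)%R.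
Proof.
  intros H e He. apply (H (fun z => Cmod (z - y) < e)%R).
  refine (@locally_le_locally_norm C_AbsRing C_NormedModule y _ _).
  exists (mkposreal e He). intros z Hz. exact Hz.
Qed.

Lemma cauchy_lim (u : nat -> C) :
  (forall e, (0 < e)%R -> exists N, forall n k, (N <= n)%nat -> (N <= k)%nat -> (Cmod (u n - u k) < e)%R) ->
  exists y, forall e, (0 < e)%R -> exists N, forall n, (N <= n)%nat -> (Cmod (u n - y) < e)%R.
Proof.
  intros Hc.
  assert (Hex : exists y : C_CompleteNormedModule, filterlim u eventually (locally y)).
  { apply (filterlim_locally_cauchy (U := C_CompleteNormedModule) (F := eventually)).
    intros eps. destruct (Hc eps (cond_pos eps)) as [N HN].
    exists (fun n => (N <= n)%nat). split. exists N. auto.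
    intros a b Ha Hb. apply (@norm_compat1 C_AbsRing C_NormedModule).
    change (Cmod (u b - u a) < eps)%R. apply HN; auto. }
  destruct Hex as [y Hy]. exists y. apply lim_norm. exact Hy.
Qed.

Lemma Cmod_sub_sym (a b : C) : Cmod (a - b) = Cmod (b - a).
Proof. replace (a - b) with (- (b - a)) by ring. apply Cmod_opp. Qed.

Lemma Cmod_2 (a b : C) : (Cmod (a - b) <= Cmod a + Cmod b)%R.
Proof. unfold Cminus. eapply Rle_trans. apply Cmod_triangle. rewrite Cmod_opp. lra. Qed.

Lemma Cmod_4 (a b c d : C) : (Cmod (a - b - c + d) <= Cmod a + Cmod b + Cmod c + Cmod d)%R.
Proof.
  eapply Rle_trans. apply Cmod_triangle. apply Rplus_le_compat_r.
  eapply Rle_trans. apply Cmod_2. apply Rplus_le_compat_r. apply Cmod_2.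
Qed.

Lemma deriv_of_limit (Qs : nat -> C -> C) (P : C -> C) (z0 : C) (d : nat -> C) (B : R) :
  (0 <= B)%R -> (forall l, filterlim (fun K => Qs K l) eventually (locally (P l))) ->
  (forall K h, (Cmod h <= 1)%R -> (Cmod (Qs K (z0 + h) - Qs K z0 - h * d K)%C <= B * Cmod h ^ 2)%R) ->
  exists D, @is_derive C_AbsRing (AbsRing_NormedModule C_AbsRing) P z0 D.
Proof.
  intros HB HQ Hd.
  assert (Hc : forall e, (0 < e)%R -> exists N, forall n k, (N <= n)%nat -> (N <= k)%nat ->
                 (Cmod (d n - d k) < e)%R).
  { intros e He.
    set (del := Rmin 1 (e / (4 * (B + 1)))).
    assert (Hdel : (0 < del)%R).
    { apply Rmin_pos. lra. apply Rdiv_lt_0_compat; lra. }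
    assert (Hdel1 : (del <= 1)%R) by apply Rmin_l.
    assert (Hdel2 : (del <= e / (4 * (B + 1)))%R) by apply Rmin_r.
    set (h := RtoC del).
    assert (Hh : Cmod h = del) by (unfold h; rewrite Cmod_R; apply Rabs_pos_eq; lra).
    destruct (lim_norm _ _ (HQ (z0 + h)) (e * del / 8)) as [N1 HN1]. nra.
    destruct (lim_norm _ _ (HQ z0) (e * del / 8)) as [N2 HN2]. nra.
    exists (max N1 N2). intros n k Hn Hk.
    assert (E : h * (d n - d k) =
       ((Qs n (z0 + h) - P (z0 + h)) - (Qs k (z0 + h) - P (z0 + h)))
       - ((Qs n z0 - P z0) - (Qs k z0 - P z0))
       - (Qs n (z0 + h) - Qs n z0 - h * d n) + (Qs k (z0 + h) - Qs k z0 - h * d k)) by ring.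
    assert (T : (Cmod (h * (d n - d k)) < e * del)%R).
    { rewrite E. eapply Rle_lt_trans. apply Cmod_4.
      assert (C1 := Cmod_2 (Qs n (z0 + h) - P (z0 + h)) (Qs k (z0 + h) - P (z0 + h))).
      assert (C2 := Cmod_2 (Qs n z0 - P z0) (Qs k z0 - P z0)).
      assert (A1 := HN1 n ltac:(lia)). assert (A2 := HN1 k ltac:(lia)).
      assert (A3 := HN2 n ltac:(lia)). assert (A4 := HN2 k ltac:(lia)).
      assert (A5 := Hd n h ltac:(lra)). assert (A6 := Hd k h ltac:(lra)).
      rewrite Hh in A5, A6.
      assert (B * del ^ 2 <= e * del / 4)%R.
      { assert (B * del <= e / 4)%R.
        { apply Rle_trans with ((B + 1) * (e / (4 * (B + 1))))%R.
          apply Rmult_le_compat; lra. right. field. lra. }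
        nra. }
      lra. }
    rewrite Cmod_mult, Hh in T.
    assert (Hx := Cmod_ge_0 (d n - d k)). nra. }
  destruct (cauchy_lim d Hc) as [D HD]. exists D.
  apply QE2 with (B := B) (d := 1%R). lra.
  intros h Hh.
  apply Rnot_lt_le. intros Hlt.
  set (g := (Cmod (P (z0 + h) - P z0 - h * D)%C - B * Cmod h ^ 2)%R) in *.
  assert (Hg : (0 < g)%R) by (unfold g; lra).
  destruct (lim_norm _ _ (HQ (z0 + h)) (g / 4)) as [N1 HN1]. lra.
  destruct (lim_norm _ _ (HQ z0) (g / 4)) as [N2 HN2]. lra.
  destruct (HD (g / 4)%R) as [N3 HN3]. lra.
  set (n := max N1 (max N2 N3)).
  assert (A1 := HN1 n ltac:(lia)). assert (A2 := HN2 n ltac:(lia)).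
  assert (A3 := HN3 n ltac:(lia)). assert (A4 := Hd n h Hh).
  assert (E : P (z0 + h) - P z0 - h * D =
     - (Qs n (z0 + h) - P (z0 + h)) + (Qs n z0 - P z0) + (Qs n (z0 + h) - Qs n z0 - h * d n)
     + h * (d n - D)) by ring.
  assert (T : (Cmod (P (z0 + h) - P z0 - h * D)%C <=
     Cmod (Qs n (z0 + h) - P (z0 + h))%C + Cmod (Qs n z0 - P z0)%C + Cmod (Qs n (z0 + h) - Qs n z0 - h * d n)%C
     + Cmod h * Cmod (d n - D)%C)%R).
  { rewrite E. eapply Rle_trans. apply Cmod_triangle. rewrite Cmod_mult.
    apply Rplus_le_compat_r. eapply Rle_trans. apply Cmod_triangle. apply Rplus_le_compat_r.
    eapply Rle_trans. apply Cmod_triangle. rewrite Cmod_opp. lra. }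

  assert (Cmod h * Cmod (d n - D) <= Cmod (d n - D))%R.
  { assert (Hx := Cmod_ge_0 (d n - D)). nra. }
  unfold g in *. lra.
Qed.

End Part_D.

Section Part_E.
Local Open Scope R_scope.


Lemma exp_le (a b : R) : a <= b -> exp a <= exp b.
Proof. intros [H|H]. left; apply exp_increasing; auto. subst; lra. Qed.

Lemma LJ (J x : R) : 0 <= J -> 0 < x -> J * ln x <= J ^ 2 + x.
Proof.
  intros HJ Hx.
  assert (Hs : 0 < sqrt x) by (apply sqrt_lt_R0; auto).
  assert (Hss : sqrt x * sqrt x = x) by (apply sqrt_sqrt; lra).
  assert (Hl : ln x = 2 * ln (sqrt x)).
  { rewrite <- Hss at 1. rewrite ln_mult; auto. ring. }
  assert (Hle : ln (sqrt x) <= sqrt x - 1).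
  { assert (H := exp_ineq1_le (ln (sqrt x))). rewrite exp_ln in H; auto. lra. }
  rewrite Hl.
  assert (J * (2 * ln (sqrt x)) <= J * (2 * sqrt x)) by (apply Rmult_le_compat_l; lra).
  assert (H2 : 0 <= (J - sqrt x) ^ 2) by apply pow2_ge_0.
  assert (H3 : J * (2 * sqrt x) <= J ^ 2 + x).
  { rewrite <- Hss at 2. nra. }
  lra.
Qed.

Lemma ssum_mono (eta : nat -> C) : (forall n, (1 <= n)%nat -> eta n <> 0%C) ->
  forall K i, ssum eta K <= ssum eta (K + i).
Proof.
  intros Hne K i. induction i.
  - rewrite Nat.add_0_r. lra.
  - rewrite Nat.add_succ_r. simpl.
    assert (0 < Cmod (eta (S (K + i)))) by (apply Cmod_gt_0; apply Hne; lia).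
    assert (0 < / Cmod (eta (S (K + i)))) by (apply Rinv_0_lt_compat; auto). lra.
Qed.

Lemma ssum_bound (eta : nat -> C) (Cst : R) (N : nat) :
  (forall n, (1 <= n)%nat -> eta n <> 0%C) -> (0 < N)%nat -> 0 < Cst ->
  (forall n, (N <= n)%nat -> Cst * INR n ^ 2 <= Cmod (eta n)) ->
  forall K, ssum eta K <= ssum eta N + / (Cst * INR N).
Proof.
  intros Hne HN HC Hg K.
  assert (HNr : 1 <= INR N) by (replace 1 with (INR 1) by reflexivity; apply le_INR; lia).
  assert (Hpos : 0 < / (Cst * INR N)) by (apply Rinv_0_lt_compat; nra).
  destruct (le_lt_dec K N) as [HK|HK].
  - replace N with (K + (N - K))%nat by lia. 
    assert (H := ssum_mono eta Hne K (N - K)).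
    replace (K + (N - K))%nat with N in * by lia. lra.
  - assert (Hi : forall i, ssum eta (N + i) <= ssum eta N + / Cst * (/ INR N - / INR (N + i))).
    { induction i.
      - rewrite Nat.add_0_r. ring_simplify. lra.
      - rewrite Nat.add_succ_r. simpl ssum.
        set (k := INR (N + i)).
        assert (Hk : INR N <= k) by (apply le_INR; lia).
        assert (HS : INR (S (N + i)) = k + 1) by (rewrite S_INR; reflexivity).
        assert (Hge := Hg (S (N + i)) ltac:(lia)). rewrite HS in Hge.
        assert (HE : 0 < Cmod (eta (S (N + i)))) by nra.
        assert (/ Cmod (eta (S (N + i))) <= / (Cst * (k + 1) ^ 2)).
        { apply Rinv_le_contravar; nra. }
        assert (/ (Cst * (k + 1) ^ 2) <= / Cst * (/ k - / (k + 1))).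
        { replace (/ Cst * (/ k - / (k + 1))) with (/ (Cst * (k * (k + 1)))) by (field; lra).
          apply Rinv_le_contravar. nra. nra. }
        rewrite HS. fold k in IHi. lra. }
    replace K with (N + (K - N))%nat by lia.
    eapply Rle_trans. apply Hi.
    assert (0 < INR (N + (K - N))) by (apply lt_0_INR; lia).
    assert (0 < / INR (N + (K - N))) by (apply Rinv_0_lt_compat; auto).
    replace (/ (Cst * INR N)) with (/ Cst * / INR N) by (field; lra).
    assert (0 < / Cst) by (apply Rinv_0_lt_compat; auto). nra.
Qed.

End Part_E.

Section Part_F.
Local Open Scope R_scope.


Fixpoint cnt (eta : nat -> C) (r : R) (K : nat) : nat :=
  match K with
  | O => O
  | S k => if Rlt_dec (Cmod (eta (S k))) (2 * r) then S (cnt eta r k) else cnt eta r k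
  end.

Section Growth.
Variables (eta c : nat -> C) (Rad Cst : R) (N : nat) (z : C).
Hypothesis Hne : forall n, (1 <= n)%nat -> eta n <> 0%C.
Hypothesis HN : (0 < N)%nat.
Hypothesis HC : 0 < Cst.
Hypothesis Hg : forall n, (N <= n)%nat -> Cst * INR n ^ 2 <= Cmod (eta n).
Hypothesis HR : 0 < Rad.
Hypothesis Hec : forall n, (1 <= n)%nat -> Cmod (eta n - c n)%C <= Rad / 2.
Hypothesis Hz0 : Rad < Cmod z.
Hypothesis Hzn : forall n, (1 <= n)%nat -> Rad < Cmod (z - c n)%C.

Let r := Cmod z.

Lemma factor_eq n : (1 <= n)%nat -> Cmod (1 - z / eta n)%C = Cmod (eta n - z)%C / Cmod (eta n).
Proof.
  intros Hn. rewrite <- Cmod_div by (apply Hne; auto).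
  f_equal. field. apply Hne; auto.
Qed.

Lemma dist_eta n : (1 <= n)%nat -> Rad / 2 < Cmod (eta n - z)%C.
Proof.
  intros Hn. assert (H := Cmod_rev (z - c n) (eta n - c n)).
  replace ((z - c n) - (eta n - c n))%C with (- (eta n - z))%C in H by ring.
  rewrite Cmod_opp in H. assert (H1 := Hzn n Hn). assert (H2 := Hec n Hn). lra.
Qed.

Lemma factor_small n : (1 <= n)%nat -> Cmod (eta n) < 2 * r ->
  Rad / (4 * r) <= Cmod (1 - z / eta n)%C.
Proof.
  intros Hn Hs. rewrite factor_eq by auto.
  assert (He : 0 < Cmod (eta n)) by (apply Cmod_gt_0; apply Hne; auto).
  assert (Hd := dist_eta n Hn).
  apply Rle_trans with ((Rad / 2) / Cmod (eta n)).
  - unfold Rdiv. replace (/ (4 * r)) with (/ 2 * / (2 * r)) by (field; unfold r; lra).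
    rewrite Rmult_assoc. apply Rmult_le_compat_l. lra.
    apply Rmult_le_compat_l. lra. apply Rinv_le_contravar; lra.
  - unfold Rdiv. apply Rmult_le_compat_r. left; apply Rinv_0_lt_compat; auto. lra.
Qed.

Lemma factor_big n : (1 <= n)%nat -> 2 * r <= Cmod (eta n) ->
  exp (- (2 * r / Cmod (eta n))) <= Cmod (1 - z / eta n)%C.
Proof.
  intros Hn Hb.
  assert (He : 0 < Cmod (eta n)) by (apply Cmod_gt_0; apply Hne; auto).
  set (t := r / Cmod (eta n)).
  assert (Ht0 : 0 <= t) by (unfold t, r; apply Rmult_le_pos; [apply Cmod_ge_0| left; apply Rinv_0_lt_compat; auto]).
  assert (Ht1 : t <= 1 / 2).
  { unfold t. apply Rmult_le_reg_r with (Cmod (eta n)); auto. unfold Rdiv.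
    rewrite Rmult_assoc, Rinv_l by lra. lra. }
  assert (H1 : 1 - t <= Cmod (1 - z / eta n)%C).
  { assert (H := Cmod_rev 1 (z / eta n)). rewrite Cmod_1, Cmod_div in H by (apply Hne; auto).
    unfold t, r. lra. }
  replace (2 * r / Cmod (eta n)) with (2 * t) by (unfold t; field; lra).
  eapply Rle_trans. 2: apply H1.
  rewrite exp_Ropp.
  assert (H2 := exp_ineq1_le (2 * t)).
  apply Rle_trans with (/ (1 + 2 * t)).
  apply Rinv_le_contravar; lra.
  apply Rmult_le_reg_r with (1 + 2 * t). lra.
  rewrite Rinv_l by lra. nra.
Qed.

Lemma cnt_inv K : (cnt eta r K <= K)%nat /\
  ((cnt eta r K <= N)%nat \/ Cst * INR (cnt eta r K) ^ 2 <= 2 * r).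
Proof.
  induction K.
  - simpl. split. lia. left. lia.
  - simpl. destruct (Rlt_dec (Cmod (eta (S K))) (2 * r)) as [Hs|Hs].
    + destruct IHK as [I1 I2]. split. lia.
      destruct (le_lt_dec N (S K)) as [HK|HK].
      * right. assert (H := Hg (S K) HK).
        assert (INR (S (cnt eta r K)) <= INR (S K)) by (apply le_INR; lia).
        assert (0 <= INR (S (cnt eta r K))) by apply pos_INR.
        assert (INR (S (cnt eta r K)) ^ 2 <= INR (S K) ^ 2) by (apply pow_incr; lra).
        nra.
      * left. lia.
    + destruct IHK as [I1 I2]. split. lia. exact I2.
Qed.

Lemma pp_lower K :
  (Rad / (4 * r)) ^ (cnt eta r K) * exp (- (2 * r * ssum eta K)) <= Cmod (partial_prod eta K z).
Proof.
  assert (Hr : 0 < r) by (unfold r; lra).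
  assert (Hy : 0 < Rad / (4 * r)) by (apply Rdiv_lt_0_compat; lra).
  induction K.
  - simpl. rewrite Cmod_1. rewrite Rmult_0_r, Ropp_0, exp_0. lra.
  - simpl cnt. simpl ssum. simpl partial_prod. rewrite Cmod_mult.
    assert (He : 0 < Cmod (eta (S K))) by (apply Cmod_gt_0; apply Hne; lia).
    assert (Hi : 0 < / Cmod (eta (S K))) by (apply Rinv_0_lt_compat; auto).
    assert (Hp : 0 <= (Rad / (4 * r)) ^ cnt eta r K) by (apply pow_le; lra).
    destruct (Rlt_dec (Cmod (eta (S K))) (2 * r)) as [Hs|Hs].
    + assert (F := factor_small (S K) ltac:(lia) Hs).
      assert (X : exp (- (2 * r * (ssum eta K + / Cmod (eta (S K))))) <= exp (- (2 * r * ssum eta K))).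
      { apply exp_le. nra. }
      simpl pow.
      assert (0 < exp (- (2 * r * (ssum eta K + / Cmod (eta (S K)))))) by apply exp_pos.
      assert (0 < exp (- (2 * r * ssum eta K))) by apply exp_pos.
      apply Rle_trans with ((Rad / (4 * r)) ^ cnt eta r K * exp (- (2 * r * ssum eta K)) * (Rad / (4 * r))).
      * assert (Hq : 0 <= (Rad / (4 * r)) ^ cnt eta r K * (Rad / (4 * r))) by nra.
        replace (Rad / (4 * r) * (Rad / (4 * r)) ^ cnt eta r K *
                 exp (- (2 * r * (ssum eta K + / Cmod (eta (S K))))))
          with ((Rad / (4 * r)) ^ cnt eta r K * (Rad / (4 * r)) *
                exp (- (2 * r * (ssum eta K + / Cmod (eta (S K)))))) by ring.
        replace ((Rad / (4 * r)) ^ cnt eta r K * exp (- (2 * r * ssum eta K)) * (Rad / (4 * r)))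
          with ((Rad / (4 * r)) ^ cnt eta r K * (Rad / (4 * r)) * exp (- (2 * r * ssum eta K))) by ring.
        apply Rmult_le_compat_l; auto.
      * apply Rmult_le_compat; auto.
        apply Rmult_le_pos; auto. left; apply exp_pos. lra.
    + apply Rnot_lt_le in Hs.
      assert (F := factor_big (S K) ltac:(lia) Hs).
      replace (- (2 * r * (ssum eta K + / Cmod (eta (S K)))))
        with (- (2 * r * ssum eta K) + - (2 * r / Cmod (eta (S K)))) by (field; lra).
      rewrite exp_plus. rewrite <- Rmult_assoc.
      apply Rmult_le_compat; auto.
      apply Rmult_le_pos; auto. left; apply exp_pos. left; apply exp_pos.
Qed.

Lemma Q_lower (m K : nat) :
  Rad ^ m * exp (- (INR N ^ 2 + (2 / Cst + 4 / Rad) * r)) *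
    exp (- (2 * r * (ssum eta N + / (Cst * INR N)))) <= Cmod (z ^ m * partial_prod eta K z)%C.
Proof.
  assert (Hr : 0 < r) by (unfold r; lra).
  assert (Hrr : Rad < r) by (unfold r; lra).
  rewrite Cmod_mult, Cmod_pow. fold r.
  assert (Hpp := pp_lower K).
  set (j := cnt eta r K) in *.
  set (x := 4 * r / Rad).
  assert (Hx : 1 < x).
  { assert (Hxe : x * Rad = 4 * r) by (unfold x; field; lra). nra. }
  assert (Hlx : 0 < ln x) by (rewrite <- ln_1; apply ln_increasing; lra).
  assert (Hyj : (Rad / (4 * r)) ^ j = exp (- (INR j * ln x))).
  { rewrite exp_Ropp. replace (exp (INR j * ln x)) with (Rpower x (INR j)) by reflexivity.
    rewrite Rpower_pow by lra. rewrite <- pow_inv. f_equal. unfold x. field. lra. }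
  assert (Hjb : INR j * ln x <= INR N ^ 2 + (2 / Cst + 4 / Rad) * r).
  { assert (HNr : 0 <= INR N) by apply pos_INR.
    assert (Hxr : x = 4 / Rad * r) by (unfold x; field; lra).
    assert (H2 : 0 <= 2 / Cst * r) by (apply Rmult_le_pos; [apply Rlt_le, Rdiv_lt_0_compat|]; lra).
    destruct (cnt_inv K) as [_ [Hj|Hj]]; fold j in Hj.
    - assert (INR j <= INR N) by (apply le_INR; auto).
      assert (INR j * ln x <= INR N * ln x) by (apply Rmult_le_compat_r; lra).
      assert (L := LJ (INR N) x HNr ltac:(lra)). lra.
    - assert (L := LJ (INR j) x (pos_INR j) ltac:(lra)).
      assert (INR j ^ 2 <= 2 / Cst * r).
      { apply Rmult_le_reg_l with Cst; auto. replace (Cst * (2 / Cst * r)) with (2 * r) by (field; lra). lra. }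
      assert (0 <= INR N ^ 2) by nra. lra. }
  rewrite Hyj in Hpp.
  assert (Hs := ssum_bound eta Cst N Hne HN HC Hg K).
  assert (HRm : Rad ^ m <= r ^ m) by (apply pow_incr; lra).
  assert (HRm0 : 0 <= Rad ^ m) by (apply pow_le; lra).
  rewrite Rmult_assoc.
  apply Rmult_le_compat; auto.
  - apply Rmult_le_pos; left; apply exp_pos.
  - eapply Rle_trans. 2: apply Hpp.
    apply Rmult_le_compat. left; apply exp_pos. left; apply exp_pos.
    apply exp_le. lra. apply exp_le. nra.
Qed.

End Growth.

End Part_F.

Section Part_G.
Local Open Scope R_scope.


Lemma finite_min (f : nat -> R) : forall n0, (forall n, (n < n0)%nat -> 0 < f n) ->
  exists d, 0 < d /\ d <= 1 /\ forall n, (n < n0)%nat -> d <= f n.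
Proof.
  induction n0; intros Hf.
  - exists 1. split. lra. split. lra. intros; lia.
  - destruct IHn0 as [d [Hd [Hd1 Hdn]]]. intros; apply Hf; lia.
    exists (Rmin d (f n0)). split. apply Rmin_pos; auto. split.
    eapply Rle_trans. apply Rmin_l. auto.
    intros n Hn. destruct (Nat.eq_dec n n0) as [->|Hne]. apply Rmin_r.
    eapply Rle_trans. apply Rmin_l. apply Hdn. lia.
Qed.

Lemma Om_open (eta c : nat -> C) (Cst Rad : R) (N : nat) :
  0 < Cst -> 0 < Rad ->
  (forall n, (N <= n)%nat -> Cst * INR n ^ 2 <= Cmod (eta n)) ->
  (forall n, (1 <= n)%nat -> Cmod (eta n - c n)%C <= Rad / 2) ->
  open (fun z : C => forall n, Rad < Cmod (z - c n)%C).
Proof.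
  intros HC HR Hg Hec z Hz.
  destruct (INR_archimed Cst (Cmod z + 2 * Rad + 1) HC) as [n1 Hn1].
  set (n0 := max (max N 1) n1).
  assert (Hbig : forall n, (n0 <= n)%nat -> Cmod z + Rad + 1 < Cmod (c n)).
  { intros n Hn.
    assert (H1 : INR n1 <= INR n) by (apply le_INR; lia).
    assert (H2 : 1 <= INR n) by (replace 1 with (INR 1) by reflexivity; apply le_INR; lia).
    assert (H3 := Hg n ltac:(lia)). assert (H4 := Hec n ltac:(lia)).
    assert (H5 := Cmod_rev (eta n) (eta n - c n)).
    replace (eta n - (eta n - c n))%C with (c n) in H5 by ring.
    assert (H6 : INR n <= INR n ^ 2) by nra.
    assert (Cst * INR n1 <= Cst * INR n ^ 2) by (apply Rmult_le_compat_l; lra).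
    lra. }
  destruct (finite_min (fun n => Cmod (z - c n)%C - Rad) n0) as [d [Hd [Hd1 Hdn]]].
  { intros n _. specialize (Hz n). lra. }
  apply (@locally_le_locally_norm C_AbsRing C_NormedModule z).
  exists (mkposreal d Hd). intros y Hy. unfold ball_norm in Hy. simpl in Hy. change C in y, z.
  change (Cmod (y - z)%C < d) in Hy.
  intros n. destruct (lt_dec n n0) as [Hn|Hn].
  - specialize (Hdn n Hn). simpl in Hdn.
    assert (H := Cmod_rev (z - c n) (z - y)).
    replace ((z - c n) - (z - y))%C with (y - c n)%C in H by ring.
    replace (z - y)%C with (- (y - z))%C in H by ring. rewrite Cmod_opp in H. lra.
  - assert (Hb := Hbig n ltac:(lia)).
    assert (H := Cmod_rev (c n) (y)).
    assert (H2 := Cmod_rev y z).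
    replace (c n - y)%C with (- (y - c n))%C in H by ring. rewrite Cmod_opp in H.
    assert (H3 := Cmod_triangle (y - z) z). replace (y - z + z)%C with y in H3 by ring.
    lra.
Qed.

End Part_G.


Lemma wprod_le (eta : nat -> C) (a : R) : (0 <= a)%R -> (forall n, (1 <= n)%nat -> eta n <> 0%C) ->
  forall K, (0 <= wprod eta a K <= exp (a * ssum eta K))%R.
Proof.
  intros Ha Hne K. induction K; simpl.
  - rewrite Rmult_0_r, exp_0. lra.
  - assert (He : (0 < Cmod (eta (S K)))%R) by (apply Cmod_gt_0; apply Hne; lia).
    assert (Ht : (0 <= a / Cmod (eta (S K)))%R) by (unfold Rdiv; apply Rmult_le_pos; [lra|left; apply Rinv_0_lt_compat; auto]).
    replace (a * (ssum eta K + / Cmod (eta (S K))))%R with (a * ssum eta K + a * / Cmod (eta (S K)))%R by ring. rewrite exp_plus.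
    assert (H1 := exp_ineq1_le (a * / Cmod (eta (S K)))).
    split. apply Rmult_le_pos; lra.
    apply Rmult_le_compat; unfold Rdiv in *; lra.
Qed.

Lemma P_lower (eta c : nat -> C) (Rad Cst : R) (N m : nat) (P : C -> C) (z : C) :
  (forall n, (1 <= n)%nat -> eta n <> 0%C) -> (0 < N)%nat -> (0 < Cst)%R ->
  (forall n, (N <= n)%nat -> (Cst * INR n ^ 2 <= Cmod (eta n))%R) -> (0 < Rad)%R ->
  (forall n, (1 <= n)%nat -> (Cmod (eta n - c n)%C <= Rad / 2)%R) ->
  (Rad < Cmod z)%R -> (forall n, (1 <= n)%nat -> (Rad < Cmod (z - c n)%C)%R) ->
  filterlim (fun K : nat => (z ^ m * partial_prod eta K z)%C) eventually (locally (P z)) ->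
  (Rad ^ m * exp (- (INR N ^ 2 + (2 / Cst + 4 / Rad) * Cmod z)) *
    exp (- (2 * Cmod z * (ssum eta N + / (Cst * INR N)))) <= Cmod (P z))%R.
Proof.
  intros Hne HN HC Hg HR Hec Hz0 Hzn HP.
  apply Rnot_lt_le. intros Hlt.
  set (L := (Rad ^ m * exp (- (INR N ^ 2 + (2 / Cst + 4 / Rad) * Cmod z)) *
    exp (- (2 * Cmod z * (ssum eta N + / (Cst * INR N)))))%R) in *.
  destruct (lim_norm _ _ HP (L - Cmod (P z))%R) as [K HK]. lra.
  specialize (HK K (le_n K)).
  assert (HQ := Q_lower eta c Rad Cst N z Hne HN HC Hg HR Hec Hz0 Hzn m K). fold L in HQ.
  assert (H := Cmod_triangle (z ^ m * partial_prod eta K z - P z) (P z)).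
  replace (z ^ m * partial_prod eta K z - P z + P z)%C with (z ^ m * partial_prod eta K z)%C in H by ring.
  lra.
Qed.

Theorem proposition8
  (eta : nat -> C) (Cst : R) (N : nat)
  (c : nat -> C) (Rad : R) (Nt : nat) (m : nat) (P : C -> C) :
  (* eta_n nonzero for n >= 1 *)
  (forall n : nat, (1 <= n)%nat -> eta n <> 0) ->
  (* |eta_n| nondecreasing *)
  (forall n : nat, (1 <= n)%nat -> (Cmod (eta n) <= Cmod (eta (S n)))%R) ->
  (* growth: N, C > 0 with |eta_n| >= C n^2 for n >= N *)
  (0 < N)%nat -> (0 < Cst)%R ->
  (forall n : nat, (N <= n)%nat -> (Cst * INR n ^ 2 <= Cmod (eta n))%R) ->
  (* discs of radius R > 0 centred at c_n, c_0 = 0, |eta_n - c_n| <= R/2 *)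
  (0 < Rad)%R ->
  c 0%nat = 0 ->
  (forall n : nat, (1 <= n)%nat -> (Cmod (eta n - c n) <= Rad / 2)%R) ->
  (* closed discs pairwise disjoint for indices > Nt *)
  (forall n k : nat, (Nt < n)%nat -> (Nt < k)%nat -> n <> k ->
     forall z : C, ~ ((Cmod (z - c n) <= Rad)%R /\ (Cmod (z - c k) <= Rad)%R)) ->
  (* P(l) = l^m prod_{n>=1} (1 - l/eta_n), the infinite product as limit of partial products *)
  (forall l : C,
     filterlim (fun K : nat => l ^ m * partial_prod eta K l) eventually (locally (P l))) ->
  let Om := fun z : C => forall n : nat, (Rad < Cmod (z - c n))%R in
  open Om /\ A_ 1 Om (fun l : C => / P l).
Proof.
  intros Hne Hmono HN HC Hg HR Hc0 Hec Hdisj HP Om.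
  set (S := (ssum eta N + / (Cst * INR N))%R).
  assert (HS : forall K, (0 <= ssum eta K <= S)%R).
  { intros K. split. apply ssum_nonneg; auto. apply ssum_bound; auto. }
  assert (HS0 : (0 <= S)%R) by (destruct (HS 0%nat); lra).
  assert (Hin : forall z, Om z -> (Rad < Cmod z)%R /\ forall n, (1 <= n)%nat -> (Rad < Cmod (z - c n)%C)%R).
  { intros z Hz. split.
    - specialize (Hz 0%nat). rewrite Hc0 in Hz. replace (z - 0)%C with z in Hz by ring. exact Hz.
    - intros n _. apply Hz. }
  assert (Hlow : forall z, Om z ->
    (Rad ^ m * exp (- (INR N ^ 2 + (2 / Cst + 4 / Rad) * Cmod z)) *
     exp (- (2 * Cmod z * S)) <= Cmod (P z))%R).
  { intros z Hz. destruct (Hin z Hz) as [H1 H2].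
    apply P_lower with c; auto. }
  assert (Hpos : forall z, (0 < Rad ^ m * exp (- (INR N ^ 2 + (2 / Cst + 4 / Rad) * Cmod z)) *
     exp (- (2 * Cmod z * S)))%R).
  { intros z. apply Rmult_lt_0_compat. apply Rmult_lt_0_compat. apply pow_lt; lra.
    apply exp_pos. apply exp_pos. }
  assert (Hnz : forall z, Om z -> P z <> 0%C).
  { intros z Hz E. specialize (Hlow z Hz). rewrite E, Cmod_0 in Hlow. specialize (Hpos z). lra. }
  split.
  - apply Om_open with eta Cst N; auto.
  - split.
    + intros z Hz.
      assert (Hder : exists D, @is_derive C_AbsRing (AbsRing_NormedModule C_AbsRing) P z D).
      { set (a := (Cmod z + 1)%R).
        assert (Ha : (0 <= a)%R) by (unfold a; assert (H := Cmod_ge_0 z); lra).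
        apply deriv_of_limit with (Qs := fun K l => (l ^ m * partial_prod eta K l)%C)
          (d := fun K => Dm eta z K m) (B := ((S + INR m) ^ 2 * (exp (a * S) * a ^ m))%R).
        - apply Rmult_le_pos. apply pow2_ge_0. apply Rmult_le_pos. left; apply exp_pos. apply pow_le; auto.
        - exact HP.
        - intros K h Hh.
          assert (G := Q_good eta z h K Hne Hh m).
          assert (HW := wprod_le eta a Ha Hne K).
          destruct (HS K) as [HS1 HS2].
          assert (Hm := pos_INR m).
          apply (Good_weaken h _ _ _ _ _ (S + INR m)%R (exp (a * S) * a ^ m)%R) in G.
          + destruct G as [_ [_ G3]]. eapply Rle_trans. apply G3. right. ring.
          + lra.
          + apply Rmult_le_compat_r. apply pow_le; auto.
            eapply Rle_trans. apply HW. apply exp_le. apply Rmult_le_compat_l; auto. }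
      destruct Hder as [D HD].
      exists (scal D (- / (P z * P z)))%C.
      apply (is_derive_comp Cinv P z). apply Cinv_deriv. apply Hnz; auto.
      exact HD.
    + exists (2 / Cst + 4 / Rad + 2 * S)%R, (exp (INR N ^ 2) / Rad ^ m)%R.
      split. { assert (0 < 2 / Cst)%R by (apply Rdiv_lt_0_compat; lra).
               assert (0 < 4 / Rad)%R by (apply Rdiv_lt_0_compat; lra). lra. }
      split. { apply Rdiv_lt_0_compat. apply exp_pos. apply pow_lt; lra. }
      intros l Hl.
      destruct (Hin l Hl) as [Hl0 _].
      assert (Hcp : cpow_abs l 1 = Cmod l).
      { unfold cpow_abs. destruct (Req_EM_T (Cmod l) 0) as [E|E]. lra. apply Rpower_1. lra. }
      rewrite Hcp. rewrite Cmod_inv by (apply Hnz; auto).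
      specialize (Hlow l Hl). specialize (Hpos l).
      eapply Rle_trans. apply Rinv_le_contravar. exact Hpos. exact Hlow.
      right.
      assert (E : exp ((2 / Cst + 4 / Rad + 2 * S) * Cmod l) =
                  (exp ((2 / Cst + 4 / Rad) * Cmod l) * exp (2 * Cmod l * S))%R).
      { rewrite <- exp_plus. f_equal. ring. }
      assert (E2 : exp (INR N ^ 2 + (2 / Cst + 4 / Rad) * Cmod l) =
                   (exp (INR N ^ 2) * exp ((2 / Cst + 4 / Rad) * Cmod l))%R) by apply exp_plus.
      rewrite !exp_Ropp, E, E2.
      assert (0 < exp (INR N ^ 2))%R by apply exp_pos.
      assert (0 < exp ((2 / Cst + 4 / Rad) * Cmod l))%R by apply exp_pos.
      assert (0 < exp (2 * Cmod l * S))%R by apply exp_pos.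
      assert (0 < Rad ^ m)%R by (apply pow_lt; lra).
      field. repeat split; lra.
Qed.
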